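(* If $\{\mathcal{I}_j\}$ generates a SK (i.e. some protocol generates a SK), then $\mathsf{S}(\{\mathcal{I}_j\})\le\mathsf{S}_{\mathrm{L}}(\{\mathcal{I}_j\})\le\mathsf{M}^\star(\{\mathcal{I}_j\})$.
   Context: Network model: $n$ clients $c_1,\dots,c_n$, sets $\mathcal{I}_1,\dots,\mathcal{I}_n\subseteq[m]$ with $\bigcup_j\mathcal{I}_j=[m]$ (the family $\{\mathcal{I}_j\}$); messages $X_1,\dots,X_m$ i.i.d. uniform on a finite field $\mathbb{F}$ with $|\mathbb{F}|>n$; client $c_j$ holds $\{X_i:i\in\mathcal{I}_j\}$; $\underline{X}=(X_1,\dots,X_m)^T$. A protocol: in each of $t$ rounds one client broadcasts to all an element of $\mathbb{F}$ that is a function of its own messages, the round index, and all previous broadcasts; $\mathbf{T}(\underline{X})\in\mathbb{F}^t$ collects the broadcasts ($t$ = number of transmissions). Linear protocol: each broadcast is an $\mathbb{F}$-linear combination of the transmitter's messages, so $\mathbf{T}(\underline{X})=A\underline{X}$. A protocol generates a SK if there are functions $\mathsf{k}_j$ with $K=\mathsf{k}_1(\{X_i:i\in\mathcal{I}_1\},\mathbf{T}(\underline{X}))$ such that (i) $\mathsf{k}_j(\{X_i:i\in\mathcal{I}_j\},\mathbf{T}(\underline{X}))=K$ a.s. for all $j$; (ii) $K$ is uniform on $\mathbb{F}$; (iii) $I(K;\mathbf{T}(\underline{X}))=0$. $\mathsf{S}$ (resp. $\mathsf{S}_{\mathrm{L}}$) is the minimum number of transmissions of a protocol (resp. linear protocol)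 generating a SK ($\infty$ if none). $\mathsf{M}^\star(\{\mathcal{I}_j\})$ is the optimal value of the integer program: minimize $\sum_{j\in[n]}a_j$ over $a\in\mathbb{Z}^n$ subject to $\sum_{j\in\mathcal{S}}a_j\ge\left|\bigcap_{j\in[n]\setminus\mathcal{S}}\bar{\mathcal{I}}_j\right|$ for every nonempty proper subset $\mathcal{S}\subsetneq[n]$, where $\bar{\mathcal{I}}_j=(\bigcup_i\mathcal{I}_i)\setminus\mathcal{I}_j$. *)

(* Defs.v *)
From HB Require Import structures.
From mathcomp Require Import all_boot all_order all_algebra.
Set Implicit Arguments. Unset Strict Implicit. Unset Printing Implicit Defensive.
Import Order.TTheory GRing.Theory Num.Theory.

(* A realization of the messages X_1..X_m : an element of F^m.
   Since the X_i are i.i.d. uniform, probabilities are counting measures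
   over {ffun 'I_m -> F}. *)
Definition msg (F : finFieldType) (m : nat) := {ffun 'I_m -> F}.

(* Broadcast rule: f r prev x = element broadcast in round r (0-based),
   given the previous broadcasts prev and the message realization x. *)
Fixpoint trans (F : finFieldType) (m : nat)
    (f : nat -> seq F -> msg F m -> F) (x : msg F m) (r : nat) : seq F :=
  match r with
  | 0 => [::]
  | r'.+1 => let p := trans f x r' in rcons p (f r' p x)
  end.

Definition broadcast_local (F : finFieldType) (n m : nat)
    (I : 'I_n -> {set 'I_m}) (sched : nat -> 'I_n)
    (f : nat -> seq F -> msg F m -> F) : Prop :=
  forall r p (x x' : msg F m),
    (forall i, i \in I (sched r) -> x i = x' i) -> f r p x = f r p x'.

(* The protocol with t transmissions (transcript T(x) = trans f x t)
   generates a secret key: (i) all clients recover K, (ii) K uniform on F,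
   (iii) I(K;T) = 0, i.e. K and T independent. *)
Definition generates_SK (F : finFieldType) (n m : nat)
    (I : 'I_n -> {set 'I_m}) (t : nat)
    (f : nat -> seq F -> msg F m -> F) : Prop :=
  exists (k : 'I_n -> msg F m -> seq F -> F) (K : msg F m -> F),
    (forall j (x x' : msg F m) s,
        (forall i, i \in I j -> x i = x' i) -> k j x s = k j x' s) /\
    (forall j x, k j x (trans f x t) = K x) /\
    (forall c : F, (#|[set x : msg F m | K x == c]| * #|F|
                    = #|[set: msg F m]|)%N) /\
    (forall (c : F) (s : seq F),
        (#|[set x : msg F m | (K x == c) && (trans f x t == s)]|
           * #|[set: msg F m]|
         = #|[set x : msg F m | K x == c]|
           * #|[set x : msg F m | trans f x t == s]|)%N).

Definition SK_protocol (F : finFieldType) (n m : nat)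
    (I : 'I_n -> {set 'I_m}) (t : nat) : Prop :=
  exists (sched : nat -> 'I_n) (f : nat -> seq F -> msg F m -> F),
    broadcast_local I sched f /\ generates_SK I t f.

Definition SK_linear (F : finFieldType) (n m : nat)
    (I : 'I_n -> {set 'I_m}) (t : nat) : Prop :=
  exists (sched : nat -> 'I_n) (coef : nat -> 'I_m -> F),
    (forall r i, (coef r i != 0)%R -> i \in I (sched r)) /\
    generates_SK I t (fun r _ x => (\sum_(i < m) coef r i * x i)%R).

Definition is_min (P : nat -> Prop) (k : nat) : Prop :=
  P k /\ forall k', P k' -> (k <= k')%N.

Definition Ibar (n m : nat) (I : 'I_n -> {set 'I_m}) (j : 'I_n) : {set 'I_m} :=
  (\bigcup_(i < n) I i) :\: I j.

Definition IP_feasible (n m : nat) (I : 'I_n -> {set 'I_m})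
    (a : 'I_n -> int) : Prop :=
  forall S : {set 'I_n}, S != set0 -> S != setT ->
    ((#|\bigcap_(j in ~: S) Ibar I j|%:Z) <= \sum_(j in S) a j)%R.

Definition Mstar_is (n m : nat) (I : 'I_n -> {set 'I_m}) (M : int) : Prop :=
  (exists a, IP_feasible I a /\ (\sum_(j < n) a j)%R = M) /\
  (forall a, IP_feasible I a -> (M <= \sum_(j < n) a j)%R).

(* Main.v *)
Require Import Defs.
From HB Require Import structures.
From mathcomp Require Import all_boot all_order all_algebra.
From mathcomp Require Import zify ring.
From Stdlib Require Import Classical.
Import Order.TTheory GRing.Theory Num.Theory.

Module Aux.
Set Implicit Arguments. Unset Strict Implicit. Unset Printing Implicit Defensive.

Lemma ex_is_min (P : nat -> Prop) : (exists k, P k) -> exists k, is_min P k.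
Proof.
move=> [k Pk]; elim/ltn_ind: k Pk => k IH Pk.
case: (classic (exists k', P k' /\ k' < k)) => [[k' [Pk' lt]]|H].
  exact: IH lt Pk'.
exists k; split=> // k' Pk'; rewrite leqNgt; apply/negP => lt; apply: H; eauto.
Qed.

Section Trans.
Variables (F : finFieldType) (m : nat).

Lemma size_trans (f : nat -> seq F -> msg F m -> F) x t : size (trans f x t) = t.
Proof. by elim: t => //= t IH; rewrite size_rcons IH. Qed.

Lemma nth_trans (f : nat -> seq F -> msg F m -> F) x t r d :
  r < t -> nth d (trans f x t) r = f r (trans f x r) x.
Proof.
elim: t => // t IH; rewrite ltnS leq_eqVlt => /orP [/eqP -> |lt] /=.
  by rewrite nth_rcons size_trans ltnn eqxx.
by rewrite nth_rcons size_trans lt IH.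
Qed.

Lemma trans_ext (f : nat -> seq F -> msg F m -> F) x y t :
  (forall r p, f r p x = f r p y) -> trans f x t = trans f y t.
Proof. by move=> H; elim: t => //= t ->; rewrite H. Qed.
End Trans.

Lemma sk_cross (F : finFieldType) (n m : nat) (I : 'I_n -> {set 'I_m}) t :
  (1 < #|F|) -> @SK_protocol F n m I t ->
  forall A : {set 'I_n}, A != set0 -> A != setT ->
  exists i, (exists a, a \in A /\ i \in I a) /\ (exists b, b \notin A /\ i \in I b).
Proof.
move=> HF [sched [f [Hloc [k [K [Hk [HkK [Huni Hind]]]]]]]] A HA0 HAT.
apply: NNPP => H.
have Hnc : forall i a b, a \in A -> i \in I a -> b \notin A -> i \in I b -> False.
  by move=> i a b ? ? ? ?; apply: H; exists i; split; eauto.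
pose side i := [exists a in A, i \in I a].
pose mix (x y : msg F m) : msg F m := [ffun i => if side i then x i else y i].
have sideT a i : a \in A -> i \in I a -> side i.
  by move=> ? ?; apply/existsP; exists a; apply/andP.
have sideF b i : b \notin A -> i \in I b -> ~~ side i.
  move=> ? ?; apply/negP => /existsP [a /andP [? ?]]; exact: (Hnc i a b).
have Hmix : forall r x y, trans f x r = trans f y r -> trans f (mix x y) r = trans f x r.
  elim=> // r IH x y /= /eqP; rewrite eqseq_rcons => /andP [/eqP e1 /eqP e2].
  rewrite IH //; congr rcons.
  case: (boolP (sched r \in A)) => hs.
    apply: Hloc => i hi; rewrite ffunE (sideT (sched r)) //.
  rewrite e2 e1; apply: Hloc => i hi; rewrite ffunE (negbTE (sideF (sched r) i hs hi)) //.
have [a aA] : exists a, a \in A by apply/set0Pn.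
have [b bA] : exists b, b \notin A.
  apply: NNPP => Hb; move/eqP: HAT; apply; apply/setP => c; rewrite inE.
  by apply: NNPP => /negP hc; apply: Hb; exists c.
have KT : forall x y, trans f x t = trans f y t -> K x = K y.
  move=> x y hxy.
  have hm := Hmix t x y hxy.
  have E1 : K x = K (mix x y).
    rewrite -(HkK a x) -(HkK a (mix x y)) hm; apply: Hk => i hi.
    by rewrite ffunE (sideT a).
  have E2 : K y = K (mix x y).
    rewrite -(HkK b y) -(HkK b (mix x y)) hm -hxy; apply: Hk => i hi.
    by rewrite ffunE (negbTE (sideF b i bA hi)).
  by rewrite E1 E2.
pose x0 : msg F m := [ffun=> 0%R].
have := Hind (K x0) (trans f x0 t); have := Huni (K x0).
set N := #|[set: msg F m]|.
set Kc := #|[set x | K x == K x0]|.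
set Ts := #|[set x | trans f x t == trans f x0 t]|.
have -> : [set x | (K x == K x0) && (trans f x t == trans f x0 t)]
        = [set x | trans f x t == trans f x0 t].
  apply/setP => x; rewrite !inE; case E: (trans f x t == _); rewrite ?andbF // andbT; move/eqP: E => E; by rewrite (KT _ _ E) eqxx.
fold Ts.
have Ts0 : 0 < Ts by apply/card_gt0P; exists x0; rewrite inE.
have N0 : 0 < N by apply/card_gt0P; exists x0.
move=> h1 h2.
have : N = Kc.
  by apply/eqP; rewrite -(eqn_pmul2l Ts0) h2 mulnC.
move=> hN; rewrite -hN in h1; nia.
Qed.


Section BFS.
Variables (n m : nat) (I : 'I_n -> {set 'I_m}).

Definition valid t (e : nat -> 'I_m) (p : nat -> nat) (c : nat -> 'I_n) (j : 'I_n) :=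
 (forall r, 0 < r <= t -> p r < r /\ e r \in I (c r) /\ e (p r) \in I (c r)) /\
 (forall r, r < t -> e r \notin I j) /\ e t \in I j /\
 (forall r1 r2, r1 <= t -> r2 <= t -> e r1 = e r2 -> r1 = r2).

Definition reach t (e : nat -> 'I_m) := [set c | [exists r : 'I_t.+1, e r \in I c]].

Lemma bfs :
  (forall A : {set 'I_n}, A != set0 -> A != setT ->
    exists i, (exists a, a \in A /\ i \in I a) /\ (exists b, b \notin A /\ i \in I b)) ->
  (exists i0 c0, i0 \in I c0) ->
  forall k, exists t e p c j, valid t e p c j /\ (k <= #|reach t e| \/ reach t e = setT).
Proof.
move=> Hcr [i0 [c0 h0]]; elim=> [|k [t [e [p [c [j [[V1 [V2 [V3 V4]]] H]]]]]]].
  exists 0, (fun _ => i0), (fun _ => 0), (fun _ => c0), c0; split; last by left.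
  split; first by move=> r /andP [a b]; move: a b; case: r.
  split=> //; split=> // r1 r2; rewrite !leqn0 => /eqP -> /eqP ->.
  done.
set R := reach t e.
case: (boolP (R == setT)) => [/eqP RT|RnT].
  by exists t, e, p, c, j; split; [split | right].
have jR : j \in R by rewrite inE; apply/existsP; exists ord_max.
have R0 : R != set0 by apply/set0Pn; exists j.
have [i [[a [aR ia]] [b [bR ib]]]] := Hcr R R0 RnT.
move: (aR); rewrite inE => /existsP [r0 hr0].
pose e' r := if r == t.+1 then i else e r.
pose p' r := if r == t.+1 then val r0 else p r.
pose c' r := if r == t.+1 then a else c r.
have bnot : forall r, r <= t -> e r \notin I b.
  move=> r hr; apply/negP => hb; move/negP: bR; apply; rewrite inE.
  by apply/existsP; exists (Ordinal (hr : r < t.+1)).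
have RR' : R \proper reach t.+1 e'.
  apply/properP; split.
    apply/subsetP => x; rewrite !inE => /existsP [r hr]; apply/existsP.
    exists (Ordinal (leqW (ltn_ord r))); rewrite /e' /=.
    by have := ltn_ord r; rewrite ltn_neqAle => /andP [/negbTE ->].
  exists b => //; rewrite inE; apply/existsP; exists ord_max; by rewrite /e' /= eqxx.
exists t.+1, e', p', c', b; split; last first.
  left; have := proper_card RR'; case: H => [h|h]; first by move=> h'; exact: leq_ltn_trans h h'.
  by move: RnT; rewrite /R h eqxx.
split.
  move=> r /andP [r0p]; rewrite leq_eqVlt => /orP [/eqP ->|lt].
    rewrite /p' /e' /c' eqxx; split; first by rewrite ltnS -ltnS ltn_ord.
    split=> //.
    have := ltn_ord r0; rewrite ltn_neqAle => /andP [/negbTE -> _] //.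
  rewrite ltnS in lt; have nr : (r == t.+1) = false by apply/negbTE; rewrite neq_ltn ltnS lt.
  have [h1 [h2 h3]] := V1 r (introT andP (conj r0p lt)).
  have np : (p r == t.+1) = false.
    apply/negbTE; rewrite neq_ltn; apply/orP; left; exact: leq_trans h1 (leqW lt).
  by rewrite /p' /e' /c' nr np.
split.
  move=> r hr; rewrite /e' (_ : (r == t.+1) = false); last by apply/negbTE; rewrite neq_ltn hr.
  by apply: bnot.
split; first by rewrite /e' eqxx.
move=> r1 r2 h1 h2; rewrite /e'.
case: (eqVneq r1 t.+1) => [->|n1]; case: (eqVneq r2 t.+1) => [->|n2] //.
- move=> E; have := bnot r2; rewrite -E ib => /(_ _) h; exfalso.
  have : r2 <= t by rewrite -ltnS ltn_neqAle n2 h2.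
  by move/h.
- move=> E; have := bnot r1; rewrite E ib => /(_ _) h; exfalso.
  have : r1 <= t by rewrite -ltnS ltn_neqAle n1 h1.
  by move/h.
- apply: V4; by rewrite -ltnS ltn_neqAle ?n1 ?n2.
Qed.
End BFS.


Fixpoint off (F : finFieldType) (p : nat -> nat) (s : seq F) (fuel r : nat) : F :=
  match fuel with
  | 0 => 0%R
  | f'.+1 => if r is 0 then 0%R else (nth 0%R s r.-1 + off p s f' (p r))%R
  end.

Section Count.
Variables (F : finFieldType) (m : nat).
Local Open Scope ring_scope.
Definition sh (d : F) (x : msg F m) : msg F m := [ffun i => x i + d].

Lemma sh_inj d : injective (sh d).
Proof.
move=> x y /ffunP h; apply/ffunP => i; have := h i; rewrite !ffunE; exact: addIr.
Qed.

Lemma count_shift (K : msg F m -> F) (Q : pred (msg F m)) :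
  (forall d x, Q (sh d x) = Q x) -> (forall d x, K (sh d x) = K x + d) ->
  forall c, (#|[set x | (K x == c) && Q x]| * #|F| = #|[set x | Q x]|)%N.
Proof.
move=> HQ HK c.
have cst : forall c', #|[set x | (K x == c') && Q x]| = #|[set x | (K x == c) && Q x]|.
  move=> c'; rewrite -(card_preimset _ (sh_inj (d:=c' - c))); apply: eq_card => x.
  rewrite !inE HQ HK; congr (_ && _).
  apply/eqP/eqP => h; last by rewrite h; ring.
  by rewrite -(addrK (c' - c) (K x)) h; ring.
have -> : #|[set x | Q x]| = (\sum_(c' : F) #|[set x | (K x == c') && Q x]|)%N.
  rewrite -sum1_card (partition_big K predT) //=; apply: eq_bigr => c' _.
  rewrite -sum1_card; apply: eq_bigl => x; by rewrite !inE andbC.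
rewrite (eq_bigr (fun _ => #|[set x | (K x == c) && Q x]|)) //.
by rewrite sum_nat_const mulnC.
Qed.
End Count.


Lemma sum_ind (F : finFieldType) m (x : msg F m) (a : 'I_m) :
  (\sum_(i < m) (i == a)%:R * x i = x a)%R.
Proof.
rewrite (bigD1 a) //= eqxx mul1r big1 ?addr0 // => i /negbTE ->; by rewrite mul0r.
Qed.

Lemma lin_proto (F : finFieldType) n m (I : 'I_n -> {set 'I_m}) t e p c j :
  valid I t e p c j -> reach I t e = setT -> @SK_linear F n m I t.
Proof.
move=> [V1 [V2 [V3 V4]]] RT.
pose coef r (i : 'I_m) : F :=
  if r < t then ((i == e r.+1)%:R - (i == e (p r.+1))%:R)%R else 0%R.
pose g := (fun r (_ : seq F) (x : msg F m) => \sum_(i < m) coef r i * x i)%R.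
have geval : forall r s x, g r s x = if r < t then (x (e r.+1) - x (e (p r.+1)))%R else 0%R.
  move=> r s x; rewrite /g /coef; case: ifP => _.
    under eq_bigr do rewrite mulrBl.
    by rewrite sumrB !sum_ind.
  by rewrite big1 // => i _; rewrite mul0r.
exists (fun r => c r.+1), coef; split.
  move=> r i; rewrite /coef; case ht: (r < t); last by rewrite eqxx.
  have ht' : 0 < r.+1 <= t by [].
  have [_ [h1 h2]] := V1 r.+1 ht'.
  case: (i =P e r.+1) => [-> _ //|n1].
  case: (i =P e (p r.+1)) => [-> _ //|n2].
  by rewrite subrr eqxx.
rewrite -/g.
pose T x := trans g x t.
have off_ok : forall x fuel r, r <= fuel -> r <= t -> off p (T x) fuel r = (x (e r) - x (e 0))%R.
  move=> x; elim=> [|fu IH] [|r] //=; try by rewrite subrr.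
  rewrite ltnS => hr ht.
  have [h1 _] := V1 r.+1 ht.
  rewrite IH; last exact: leq_trans (ltnW h1) ht.
    by rewrite /T nth_trans // geval ht; ring.
  by rewrite -ltnS; exact: leq_trans h1 _.
pose q (cl : 'I_n) := if [pick r : 'I_t.+1 | e r \in I cl] is Some r then val r else 0.
have qP : forall cl, q cl <= t /\ e (q cl) \in I cl.
  move=> cl; rewrite /q; case: pickP => [r hr|h]; first by split; [rewrite -ltnS ltn_ord | exact: hr].
  have : cl \in reach I t e by rewrite RT inE.
  by rewrite inE => /existsP [r]; rewrite h.
exists (fun cl x s => x (e (q cl)) - off p s (q cl) (q cl))%R, (fun x => x (e 0)).
split.
  move=> cl x x' s H; rewrite H //; exact: (qP cl).2.
split.
  move=> cl x; rewrite -/(T x) off_ok //; first by ring.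
  exact: (qP cl).1.
have HT : forall d x, T (sh d x) = T x.
  move=> d x; apply: trans_ext => r s; rewrite !geval !ffunE; case: ifP => // _; ring.
have HK : forall d (x : msg F m), sh d x (e 0) = (x (e 0) + d)%R by move=> d x; rewrite ffunE.
split.
  move=> cv; have := count_shift (Q := predT) (fun _ _ => erefl) HK cv.
  have -> : [set x : msg F m | (x (e 0) == cv) && predT x] = [set x : msg F m | x (e 0) == cv].
    by apply/setP => x; rewrite !inE andbT.
  move=> ->; apply: eq_card => x; by rewrite !inE.
move=> cv s.
have h1 := count_shift (Q := fun x => T x == s) (fun d x => congr1 (fun z => z == s) (HT d x)) HK cv.
have h2 := count_shift (Q := predT) (fun _ _ => erefl) HK cv.
have -> : #|[set: msg F m]| = #|[set x : msg F m | predT x]| by apply: eq_card => x; rewrite !inE.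
rewrite -h1 -h2 /= (_ : [set x : msg F m | (x (e 0) == cv) && true] = [set x : msg F m | x (e 0) == cv]);
  last by apply/setP => x; rewrite !inE andbT.
by rewrite mulnCA.
Qed.


Lemma lin_is_proto (F : finFieldType) n m (I : 'I_n -> {set 'I_m}) t :
  @SK_linear F n m I t -> @SK_protocol F n m I t.
Proof.
move=> [sched [coef [Hs Hg]]]; exists sched; eexists; split; last exact: Hg.
move=> r p x x' H; apply: eq_bigr => i _.
case: (eqVneq (coef r i) 0%R) => [->|nz]; first by rewrite !mul0r.
by rewrite H //; apply: Hs.
Qed.

Section Feas.
Variables (n m : nat) (I : 'I_n -> {set 'I_m}).
Hypothesis n2 : 1 < n.
Local Open Scope ring_scope.

Lemma other (j : 'I_n) : exists j' : 'I_n, j' != j.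
Proof.
have h0 : (0 < n)%N by lia.
case: (eqVneq j (Ordinal h0)) => [->|h]; last by exists (Ordinal h0); rewrite eq_sym.
by exists (Ordinal n2); apply/eqP => /(congr1 val).
Qed.

Lemma feas_ge0 a : IP_feasible I a -> forall j, 0 <= a j.
Proof.
move=> Ha j; have := Ha [set j].
rewrite big_set1 => h; apply: le_trans (h _ _) => //.
  by apply/set0Pn; exists j; rewrite inE.
have [j' hj'] := other j; apply/eqP => /setP /(_ j'); rewrite !inE (negbTE hj').
done.
Qed.

Lemma feas_const : IP_feasible I (fun _ => (m%:Z)).
Proof.
move=> S S0 _; have [j0 hj0] := set0Pn _ S0.
rewrite [X in _ <= X](bigD1 j0) //= -[X in X <= _]addr0; apply: lerD.
  by rewrite lez_nat; apply: leq_trans (max_card _) _; rewrite card_ord.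
by apply: sumr_ge0.
Qed.

Lemma Ibar_bound a j : IP_feasible I a -> (#|Ibar I j|%:Z <= \sum_(i < n) a i).
Proof.
move=> Ha; have := Ha (~: [set j]).
rewrite setCK big_set1 => h.
have [j' hj'] := other j.
have S0 : ~: [set j] != set0 by apply/set0Pn; exists j'; rewrite !inE.
have h' := h S0.
have h'' : ~: [set j] != setT.
  apply/eqP => /setP /(_ j); by rewrite !inE eqxx.
rewrite [X in _ <= X](bigD1 j) //=; apply: le_trans (h' h'') _.
rewrite (eq_bigl (fun i => i != j)); first by rewrite lerDr; apply: feas_ge0.
by move=> i; rewrite !inE.
Qed.

Lemma Mstar_ex : exists M : nat, Mstar_is I M%:Z.
Proof.
pose P k := exists a, IP_feasible I a /\ \sum_(i < n) a i = k%:Z.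
have Pex : exists k, P k.
  have g0 : 0 <= \sum_(i < n) (fun _ => m%:Z) i.
    by apply: sumr_ge0 => i _ /=.
  exists `|(\sum_(i < n) (fun _ => m%:Z) i)%R|%N; exists (fun _ => m%:Z); split.
    exact: feas_const.
  by rewrite gez0_abs.
have [k [[a [Ha Hs]] Hmin]] := ex_is_min Pex.
exists k; split; first by exists a.
move=> b Hb; have g0 : 0 <= \sum_(i < n) b i by apply: sumr_ge0 => i _; apply: feas_ge0.
rewrite -(gez0_abs g0) lez_nat; apply: Hmin; exists b; split=> //.
by rewrite gez0_abs.
Qed.
End Feas.

End Aux.
Import Aux.

Theorem lemma1 (F : finFieldType) (n m : nat) (I : 'I_n -> {set 'I_m}) :
  (2 <= n)%N -> (n < #|F|)%N ->
  \bigcup_(j < n) I j = [set: 'I_m] ->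
  (exists t, @SK_protocol F n m I t) ->
  exists (S SL : nat) (M : int),
    is_min (@SK_protocol F n m I) S /\ is_min (@SK_linear F n m I) SL /\ Mstar_is I M /\
    (S <= SL)%N /\ (SL%:Z <= M)%R.
Proof.
move=> n2 nF HU [t0 Ht0].
have F1 : (1 < #|F|)%N by lia.
have Hcr := sk_cross F1 Ht0.
have h0 : (0 < n)%N by lia.
have [i0 [[c0 [_ hc0]] _]] : exists i, (exists a, a \in [set Ordinal h0] /\ i \in I a) /\
      (exists b, b \notin [set Ordinal h0] /\ i \in I b).
  apply: Hcr; first by apply/set0Pn; exists (Ordinal h0); rewrite inE.
  by apply/eqP => /setP /(_ (Ordinal n2)); rewrite !inE.
have [t [e [p [c [j [V H]]]]]] := bfs Hcr (ex_intro _ i0 (ex_intro _ c0 hc0)) n.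
have RT : reach I t e = setT.
  case: H => // H; apply/eqP; rewrite eqEcard subsetT cardsT card_ord //.
have Hlin := @lin_proto F n m I t e p c j V RT.
have [S [HS HSmin]] := ex_is_min (ex_intro _ t0 Ht0).
have [SL [HSL HSLmin]] := ex_is_min (ex_intro _ t Hlin).
have [M HM] := Mstar_ex I n2.
exists S, SL, (Posz M); split; first by split.
split; first by split.
split=> //.
split; first by apply: HSmin; apply: lin_is_proto.
have [[a [Ha Hs]] _] := HM.
rewrite -Hs; apply: le_trans (Ibar_bound n2 j Ha).
rewrite lez_nat; apply: leq_trans (HSLmin _ Hlin) _.
move: V => [_ [V2 [_ V4]]].
have inj : injective (fun r : 'I_t => e (val r)).
  move=> r1 r2 E; apply: val_inj; apply: V4 => //; apply: ltnW; exact: ltn_ord.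
rewrite -[X in (X <= _)%N]card_ord -(card_imset _ inj); apply: subset_leq_card.
apply/subsetP => x /imsetP [r _ ->]; rewrite /Ibar HU !inE andbT.
exact: V2 (ltn_ord r).
Qed.
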